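(* Let $e_n$ and $m_n$ be the numbers of Dyck excursions with catastrophes and Dyck meanders with catastrophes of length $n$. Then \[e_n=C_e\rho_0^{-n}\big(1+O(1/n)\big),\qquad m_n=C_m\rho_0^{-n}\big(1+O(1/n)\big),\] where $\rho_0\approx0.46557$ is the unique positive root of $\rho_0^3+2\rho_0^2+\rho_0-1$, $C_e\approx0.10381$ is the positive root of $31C_e^3-62C_e^2+35C_e-3$, and $C_m\approx0.32679$ is the positive root of $31C_m^3-31C_m^2+16C_m-3$.
   Context: Dyck paths with catastrophes: paths starting at altitude $0$, never going below $0$, with steps $+1$, $-1$, and catastrophes (a step from an altitude $h\ge2$ directly to altitude $0$), all with weight $1$; meanders end anywhere, excursions end at $0$; length = number of steps. *)

(* Defs.v *)
From Stdlib Require Import Reals List Arith.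
Import ListNotations.

(* Steps: up (+1), down (-1), catastrophe (jump from altitude h >= 2 to 0). *)
Inductive step : Set := Up | Down | Cat.

Fixpoint walk (h : nat) (w : list step) : option nat :=
  match w with
  | [] => Some h
  | Up :: w' => walk (S h) w'
  | Down :: w' => match h with 0 => None | S h' => walk h' w' end
  | Cat :: w' => if Nat.leb 2 h then walk 0 w' else None
  end.

Fixpoint all_words (n : nat) : list (list step) :=
  match n with
  | 0 => [[]]
  | S n' => flat_map (fun w => [Up :: w; Down :: w; Cat :: w]) (all_words n')
  end.

Definition meander_count (n : nat) : nat :=
  length (filter (fun w => match walk 0 w with Some _ => true | None => false end)
                 (all_words n)).

Definition excursion_count (n : nat) : nat :=
  length (filter (fun w => match walk 0 w with Some 0 => true | _ => false end)
                 (all_words n)).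

(* Main.v *)
Require Import Defs.
From Stdlib Require Import Reals List Arith Lia Lra Psatz.
Import ListNotations.

Definition stepf (s : step) (h : nat) : option nat :=
  match s with
  | Up => Some (S h)
  | Down => match h with 0 => None | S h' => Some h' end
  | Cat => if Nat.leb 2 h then Some 0 else None
  end.

Lemma walk_app h w s :
  walk h (w ++ [s]) = match walk h w with Some h' => stepf s h' | None => None end.
Proof.
  revert h; induction w as [|x w IH]; intros h.
  - destruct s; simpl; auto.
  - destruct x; simpl; try (destruct h as [|[|h]]); simpl; try apply IH; reflexivity.
Qed.

Lemma len_filter_fm (q : list step -> bool) l :
  length (filter q (flat_map (fun w => [Up :: w; Down :: w; Cat :: w]) l)) =
  (length (filter (fun w => q (Up :: w)) l) + length (filter (fun w => q (Down :: w)) l)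
   + length (filter (fun w => q (Cat :: w)) l))%nat.
Proof.
  induction l as [|w l IH]; simpl; auto.
  destruct (q (Up :: w)), (q (Down :: w)), (q (Cat :: w)); simpl; rewrite IH; lia.
Qed.

Lemma len_filter_app (q : list step -> bool) n :
  length (filter q (all_words (S n))) =
  (length (filter (fun w => q (w ++ [Up])) (all_words n)) +
   length (filter (fun w => q (w ++ [Down])) (all_words n)) +
   length (filter (fun w => q (w ++ [Cat])) (all_words n)))%nat.
Proof.
  revert q; induction n as [|n IH]; intros q.
  - simpl. destruct (q [Up]), (q [Down]), (q [Cat]); reflexivity.
  - change (all_words (S (S n))) with
      (flat_map (fun w => [Up :: w; Down :: w; Cat :: w]) (all_words (S n))).
    rewrite len_filter_fm.
    rewrite (IH (fun w => q (Up :: w))), (IH (fun w => q (Down :: w))),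
            (IH (fun w => q (Cat :: w))).
    change (all_words (S n)) with
      (flat_map (fun w => [Up :: w; Down :: w; Cat :: w]) (all_words n)).
    rewrite !len_filter_fm. simpl. lia.
Qed.

Definition cnt (n : nat) (p : option nat -> bool) : nat :=
  length (filter (fun w => p (walk 0 w)) (all_words n)).

Definition bindo (o : option nat) (s : step) :=
  match o with Some h => stepf s h | None => None end.

Lemma cnt_S n p :
  cnt (S n) p = (cnt n (fun o => p (bindo o Up)) + cnt n (fun o => p (bindo o Down))
                 + cnt n (fun o => p (bindo o Cat)))%nat.
Proof.
  unfold cnt. rewrite len_filter_app.
  f_equal; [f_equal|]; apply f_equal, filter_ext; intros w; rewrite walk_app; reflexivity.
Qed.

Lemma filter_len_ext {A} (p q : A -> bool) l :
  (forall x, p x = q x) -> length (filter p l) = length (filter q l).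
Proof. intros H; rewrite (filter_ext p q H); auto. Qed.

Lemma cnt_ext n p q : (forall o, p o = q o) -> cnt n p = cnt n q.
Proof. intros H; unfold cnt; apply filter_len_ext; auto. Qed.

Lemma filter_len_disj {A} (p p1 p2 : A -> bool) l :
  (forall x, p x = orb (p1 x) (p2 x)) -> (forall x, andb (p1 x) (p2 x) = false) ->
  length (filter p l) = (length (filter p1 l) + length (filter p2 l))%nat.
Proof.
  intros H1 H2; induction l as [|x l IH]; simpl; auto.
  rewrite H1. specialize (H2 x).
  destruct (p1 x), (p2 x); simpl in *; try discriminate; rewrite IH; lia.
Qed.

Lemma cnt_disj n p p1 p2 :
  (forall o, p o = orb (p1 o) (p2 o)) -> (forall o, andb (p1 o) (p2 o) = false) ->
  cnt n p = (cnt n p1 + cnt n p2)%nat.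
Proof. intros; unfold cnt; apply filter_len_disj; auto. Qed.

Lemma cnt_false n p : (forall o, p o = false) -> cnt n p = 0%nat.
Proof.
  intros H; unfold cnt; induction (all_words n); simpl; auto. rewrite H; auto.
Qed.

Definition an (n h : nat) : nat :=
  cnt n (fun o => match o with Some h' => Nat.eqb h' h | None => false end).
Definition mn (n : nat) : nat :=
  cnt n (fun o => match o with Some _ => true | None => false end).
Definition ge (k : nat) (o : option nat) : bool :=
  match o with Some h => Nat.leb k h | None => false end.

Lemma mn_split n : mn n = (an n 0 + cnt n (ge 1))%nat.
Proof.
  unfold mn, an; apply cnt_disj; intros [[|h]|]; reflexivity.
Qed.
Lemma ge1_split n : cnt n (ge 1) = (an n 1 + cnt n (ge 2))%nat.
Proof.
  unfold an; apply cnt_disj; intros [[|[|h]]|]; reflexivity.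
Qed.

Lemma an_S_S n h : an (S n) (S h) = (an n h + an n (S (S h)))%nat.
Proof.
  unfold an at 1; rewrite cnt_S.
  unfold an.
  rewrite (cnt_ext n (fun o => match bindo o Up with Some h' => Nat.eqb h' (S h) | None => false end)
     (fun o => match o with Some h' => Nat.eqb h' h | None => false end)).
  2:{ intros [k|]; simpl; auto. }
  rewrite (cnt_ext n (fun o => match bindo o Down with Some h' => Nat.eqb h' (S h) | None => false end)
     (fun o => match o with Some h' => Nat.eqb h' (S (S h)) | None => false end)).
  2:{ intros [[|k]|]; simpl; auto. }
  rewrite (cnt_false n (fun o => match bindo o Cat with Some h' => Nat.eqb h' (S h) | None => false end)).
  2:{ intros [[|[|k]]|]; simpl; reflexivity. }
  lia.
Qed.

Lemma an_S_0 n : (an (S n) 0 + an n 0)%nat = mn n.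
Proof.
  rewrite mn_split, ge1_split.
  unfold an at 1; rewrite cnt_S.
  rewrite (cnt_false n (fun o => match bindo o Up with Some h' => Nat.eqb h' 0 | None => false end)).
  2:{ intros [k|]; simpl; reflexivity. }
  rewrite (cnt_ext n (fun o => match bindo o Down with Some h' => Nat.eqb h' 0 | None => false end)
     (fun o => match o with Some h' => Nat.eqb h' 1 | None => false end)).
  2:{ intros [[|[|k]]|]; simpl; reflexivity. }
  rewrite (cnt_ext n (fun o => match bindo o Cat with Some h' => Nat.eqb h' 0 | None => false end) (ge 2)).
  2:{ intros [[|[|k]]|]; simpl; reflexivity. }
  unfold an; lia.
Qed.

Lemma mn_S n : (mn (S n) + 2 * an n 0 + an n 1)%nat = (3 * mn n)%nat.
Proof.
  pose proof (mn_split n) as E1. pose proof (ge1_split n) as E2.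
  unfold mn at 1; rewrite cnt_S.
  rewrite (cnt_ext n (fun o => match bindo o Up with Some _ => true | None => false end)
     (fun o => match o with Some _ => true | None => false end)).
  2:{ intros [k|]; simpl; reflexivity. }
  rewrite (cnt_ext n (fun o => match bindo o Down with Some _ => true | None => false end) (ge 1)).
  2:{ intros [[|k]|]; simpl; reflexivity. }
  rewrite (cnt_ext n (fun o => match bindo o Cat with Some _ => true | None => false end) (ge 2)).
  2:{ intros [[|[|k]]|]; simpl; reflexivity. }
  fold (mn n). lia.
Qed.

Lemma an_0 h : an 0 h = (if Nat.eqb h 0 then 1 else 0)%nat.
Proof. unfold an, cnt; simpl. destruct h; reflexivity. Qed.
Lemma mn_0 : mn 0 = 1%nat.
Proof. reflexivity. Qed.

Lemma an_supp n h : (n < h)%nat -> an n h = 0%nat.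
Proof.
  revert h; induction n as [|n IH]; intros h Hh.
  - rewrite an_0. destruct h; [lia|reflexivity].
  - destruct h as [|h]; [lia|]. rewrite an_S_S, !IH; lia.
Qed.

Lemma exc_an n : excursion_count n = an n 0.
Proof.
  unfold excursion_count, an, cnt. apply filter_len_ext.
  intros w; destruct (walk 0 w) as [[|k]|]; reflexivity.
Qed.
Lemma mea_mn n : meander_count n = mn n.
Proof. reflexivity. Qed.

Open Scope R_scope.

Fixpoint sm (N : nat) (g : nat -> R) : R :=
  match N with 0 => 0 | S k => sm k g + g k end.

Lemma sm_ext N g h : (forall i, (i < N)%nat -> g i = h i) -> sm N g = sm N h.
Proof.
  induction N as [|N IH]; intros H; simpl; auto.
  rewrite IH, H; auto; intros; apply H; lia.
Qed.

Lemma sm_add N g h : sm N (fun i => g i + h i) = sm N g + sm N h.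
Proof. induction N; simpl; [lra|rewrite IHN; lra]. Qed.
Lemma sm_sub N g h : sm N (fun i => g i - h i) = sm N g - sm N h.
Proof. induction N; simpl; [lra|rewrite IHN; lra]. Qed.
Lemma sm_scal N c g : sm N (fun i => c * g i) = c * sm N g.
Proof. induction N; simpl; [lra|rewrite IHN; lra]. Qed.

Lemma sm_shift N g : sm (S N) g = g O + sm N (fun i => g (S i)).
Proof. induction N; simpl in *; [lra|rewrite IHN; lra]. Qed.

Lemma sm_tail0 N k g : (forall i, (N <= i)%nat -> g i = 0) -> sm (k + N) g = sm N g.
Proof.
  intros H; induction k; simpl; auto. rewrite IHk, H; [lra|lia].
Qed.

Lemma sm_last0 N g : g N = 0 -> sm (S N) g = sm N g.
Proof. intros H; simpl; rewrite H; lra. Qed.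

Lemma sm_le N g h : (forall i, (i < N)%nat -> g i <= h i) -> sm N g <= sm N h.
Proof.
  induction N as [|N IH]; intros H; simpl; [lra|].
  apply Rplus_le_compat; [apply IH; intros; apply H; lia| apply H; lia].
Qed.

Lemma sm_nonneg N g : (forall i, (i < N)%nat -> 0 <= g i) -> 0 <= sm N g.
Proof.
  intros H. replace 0 with (sm N (fun _ => 0)). apply sm_le; auto.
  induction N; simpl; auto. rewrite IHN; [lra|intros; apply H; lia].
Qed.

Lemma sm_abs N g : Rabs (sm N g) <= sm N (fun i => Rabs (g i)).
Proof.
  induction N; simpl. rewrite Rabs_R0; lra.
  eapply Rle_trans; [apply Rabs_triang|lra].
Qed.

Lemma sm_split k N g : sm (N + k) g = sm k g + sm N (fun i => g (i + k)%nat).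
Proof. induction N; simpl; [lra|rewrite IHN; lra]. Qed.

Lemma sm_geom N x : x <> 1 -> sm N (fun i => x ^ i) = (1 - x ^ N) / (1 - x).
Proof.
  intros Hx. assert (1 - x <> 0) by lra.
  induction N; simpl. field; auto. rewrite IHN. field; auto.
Qed.

Lemma sm_ind N k c : sm N (fun j => if Nat.eqb j k then c else 0) = if Nat.ltb k N then c else 0.
Proof.
  induction N; simpl. destruct k; reflexivity.
  rewrite IHN. destruct (Nat.eqb N k) eqn:E.
  - apply Nat.eqb_eq in E; subst N. rewrite (proj2 (Nat.ltb_ge k k)) by lia.
    rewrite (proj2 (Nat.ltb_lt k (S k))) by lia. lra.
  - apply Nat.eqb_neq in E. destruct (Nat.ltb k N) eqn:E2.
    + apply Nat.ltb_lt in E2. rewrite (proj2 (Nat.ltb_lt k (S N))) by lia. lra.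
    + apply Nat.ltb_ge in E2. rewrite (proj2 (Nat.ltb_ge k (S N))) by lia. lra.
Qed.

Lemma sm_bound N g c : (forall i, (i < N)%nat -> Rabs (g i) <= c) -> Rabs (sm N g) <= INR N * c.
Proof.
  induction N as [|N IH]; intros H; cbn [sm].
  - rewrite Rabs_R0; simpl; lra.
  - eapply Rle_trans; [apply Rabs_triang|]. rewrite S_INR.
    assert (Rabs (sm N g) <= INR N * c) by (apply IH; intros; apply H; lia).
    assert (Rabs (g N) <= c) by (apply H; lia). lra.
Qed.

Fixpoint sp (r : R) (k : nat) : R * R :=
  match k with
  | O => (- / r, 1)
  | S k' => let (x, y) := sp r k' in (y, - r * y - (r + r ^ 2) * x)
  end.

Definition sig (r : R) (k : nat) : R :=
  match k with O => 1 | S k' => fst (sp r k') end.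

Lemma sig_rec r k : sig r (S (S (S k))) = - r * sig r (S (S k)) - (r + r^2) * sig r (S k).
Proof.
  unfold sig. simpl. destruct (sp r k) as [x y]. simpl. reflexivity.
Qed.
Lemma sig0 r : sig r 0 = 1. Proof. reflexivity. Qed.
Lemma sig1 r : sig r 1 = - / r. Proof. reflexivity. Qed.
Lemma sig2 r : sig r 2 = 1. Proof. reflexivity. Qed.


Lemma alg3 r b s0 s1 s2 s3 : b <> 0 -> b * (1 + r) = 1 -> b * b = r ->
  s3 = - r * s2 - b * s1 -> s2 = - r * s1 - b * s0 -> s3 = s2 + s0.
Proof.
  intros Hb H1 H2 E3 E2.
  apply (Rmult_eq_reg_l b); auto.
  assert (b * s0 = - s2 - r * s1) by lra.
  rewrite Rmult_plus_distr_l, H, E3.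
  replace (b * (- r * s2 - b * s1)) with (- (b * (1 + r)) * s2 + b * s2 - (b * b) * s1) by ring.
  rewrite H1, H2. ring.
Qed.

Lemma r_bounds r : 0 < r -> r^3 + 2 * r^2 + r - 1 = 0 -> 0.46 < r < 0.47.
Proof. intros H0 Hc. split; nra. Qed.

Lemma inv_r r : 0 < r -> r^3 + 2 * r^2 + r - 1 = 0 -> / r = (1 + r)^2.
Proof.
  intros H0 Hc. apply (Rmult_eq_reg_l r); [|lra]. rewrite Rinv_r by lra. nra.
Qed.

Lemma b_facts r : 0 < r -> r^3 + 2 * r^2 + r - 1 = 0 ->
  (r + r^2) * (1 + r) = 1 /\ (r + r^2) * (r + r^2) = r /\ r + r^2 <> 0.
Proof. intros H0 Hc. split; [nra|split; nra]. Qed.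

Lemma sig3 r : 0 < r -> r^3 + 2 * r^2 + r - 1 = 0 -> sig r 3 = 1.
Proof.
  intros H0 Hc. rewrite sig_rec, sig2, sig1, inv_r by auto. nra.
Qed.

Lemma sig_rec3 r k : 0 < r -> r^3 + 2 * r^2 + r - 1 = 0 -> (1 <= k)%nat ->
  sig r (k + 3) = sig r (k + 2) + sig r k.
Proof.
  intros H0 Hc Hk. destruct k as [|k]; [lia|].
  destruct (b_facts r H0 Hc) as [B1 [B2 B3]].
  apply (alg3 r (r + r^2) (sig r (S k)) (sig r (S k + 1)) (sig r (S k + 2)) (sig r (S k + 3))); auto.
  - replace (S k + 3)%nat with (S (S (S (S k)))) by lia.
    replace (S k + 2)%nat with (S (S (S k))) by lia.
    replace (S k + 1)%nat with (S (S k)) by lia. apply sig_rec.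
  - replace (S k + 2)%nat with (S (S (S k))) by lia.
    replace (S k + 1)%nat with (S (S k)) by lia. apply sig_rec.
Qed.

Lemma sig4 r : 0 < r -> r^3 + 2 * r^2 + r - 1 = 0 -> sig r 4 = 1 + sig r 1.
Proof.
  intros H0 Hc. pose proof (sig_rec3 r 1 H0 Hc ltac:(lia)) as E. cbn [Nat.add] in E.
  rewrite E, sig3 by auto. reflexivity.
Qed.
Lemma sig5 r : 0 < r -> r^3 + 2 * r^2 + r - 1 = 0 -> sig r 5 = 2 + sig r 1.
Proof.
  intros H0 Hc. pose proof (sig_rec3 r 2 H0 Hc ltac:(lia)) as E. cbn [Nat.add] in E.
  rewrite E, sig4, sig2 by auto. ring.
Qed.

Lemma J1 r j : 0 < r -> r^3 + 2 * r^2 + r - 1 = 0 -> (1 <= j)%nat ->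
  sig r (j + 3) - sig r j = sig r (j + 1) + (if Nat.leb 2 j then sig r (j - 1) else 0).
Proof.
  intros H0 Hc Hj. destruct j as [|[|j]]; [lia| |].
  - cbn [Nat.add Nat.leb Nat.sub]. rewrite sig4, sig2 by auto. ring.
  - simpl (Nat.leb 2 (S (S j))). rewrite (sig_rec3 r (S (S j))) by (auto; lia).
    pose proof (sig_rec3 r (S j) H0 Hc ltac:(lia)) as E.
    replace (S (S j) + 2)%nat with (S j + 3)%nat by lia.
    replace (S (S j) + 1)%nat with (S j + 2)%nat by lia.
    replace (S (S j) - 1)%nat with (S j) by lia. lra.
Qed.

Lemma J2 r j : 0 < r -> r^3 + 2 * r^2 + r - 1 = 0 -> (1 <= j)%nat ->
  sig r (j + 4) + (if Nat.leb 2 j then sig r (j + 2) else 0) =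
  3 * sig r (j + 3) - 2 * sig r j - sig r (j - 1).
Proof.
  intros H0 Hc Hj. destruct j as [|[|j]]; [lia| |].
  - cbn [Nat.add Nat.leb Nat.sub]. rewrite sig5, sig4, sig0 by auto. ring.
  - simpl (Nat.leb 2 (S (S j))).
    pose proof (sig_rec3 r (S (S j) + 1) H0 Hc ltac:(lia)) as E1.
    pose proof (sig_rec3 r (S (S j)) H0 Hc ltac:(lia)) as E2.
    pose proof (sig_rec3 r (S j) H0 Hc ltac:(lia)) as E3.
    replace (S (S j) + 1 + 3)%nat with (S (S j) + 4)%nat in E1 by lia.
    replace (S (S j) + 1 + 2)%nat with (S (S j) + 3)%nat in E1 by lia.
    replace (S (S j) + 1)%nat with (S j + 2)%nat in E1 by lia.
    replace (S (S j) + 2)%nat with (S j + 3)%nat in * by lia.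
    replace (S (S j) - 1)%nat with (S j) by lia.
    lra.
Qed.

Definition Vl r k := sig r (S k) ^ 2 + r * sig r (S k) * sig r k + (r + r^2) * sig r k ^ 2.

Lemma Vl_ge r k : 0 < r -> r * sig r k ^ 2 <= Vl r k.
Proof. intros H0; unfold Vl. nra. Qed.

Lemma Vl_step r k : (1 <= k)%nat -> Vl r (S k) = (r + r^2) * Vl r k.
Proof.
  intros Hk. destruct k as [|k]; [lia|]. unfold Vl.
  rewrite (sig_rec r k). ring.
Qed.

Lemma Vl_le r k : 0 < r -> r^3 + 2 * r^2 + r - 1 = 0 -> (1 <= k)%nat -> Vl r k <= Vl r 1.
Proof.
  intros H0 Hc Hk. induction k as [|k IH]; [lia|].
  destruct k as [|k]; [lra|].
  rewrite Vl_step by lia.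
  pose proof (Vl_ge r (S k) H0). pose proof (r_bounds r H0 Hc).
  assert (Vl r (S k) <= Vl r 1) by (apply IH; lia).
  assert (0 <= Vl r (S k)) by nra.
  assert (r + r^2 <= 1) by nra. nra.
Qed.

Definition Bs r := 1 + Vl r 1 / r.

Lemma sig_bound r k : 0 < r -> r^3 + 2 * r^2 + r - 1 = 0 -> Rabs (sig r k) <= Bs r.
Proof.
  intros H0 Hc. unfold Bs.
  assert (0 <= Vl r 1 / r).
  { unfold Rdiv; apply Rle_mult_inv_pos; [|lra]. pose proof (Vl_ge r 1 H0). nra. }
  destruct k as [|k].
  - rewrite sig0, Rabs_R1. lra.
  - assert (r * sig r (S k) ^ 2 <= Vl r 1).
    { eapply Rle_trans; [apply Vl_ge; auto| apply Vl_le; auto; lia]. }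
    assert (sig r (S k) ^ 2 <= Vl r 1 / r).
    { apply (Rmult_le_reg_l r); auto. replace (r * (Vl r 1 / r)) with (Vl r 1) by (field; lra). lra. }
    assert (Rabs (sig r (S k)) <= 1 + sig r (S k) ^ 2).
    { destruct (Rcase_abs (sig r (S k))) as [Hn|Hp];
        [rewrite Rabs_left by lra|rewrite Rabs_right by lra]; nra. }
    lra.
Qed.

Definition A n h := INR (an n h).
Definition Mr n := INR (mn n).

Lemma A_SS n h : A (S n) (S h) = A n h + A n (S (S h)).
Proof. unfold A; rewrite an_S_S, plus_INR; reflexivity. Qed.
Lemma A_S0 n : A (S n) 0 = Mr n - A n 0.
Proof. unfold A, Mr; rewrite <- an_S_0, plus_INR; ring. Qed.
Lemma Mr_S n : Mr (S n) = 3 * Mr n - 2 * A n 0 - A n 1.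
Proof.
  unfold A, Mr. pose proof (mn_S n) as E. apply (f_equal INR) in E.
  rewrite !plus_INR, !mult_INR in E. simpl (INR 2) in E. simpl (INR 3) in E. lra.
Qed.
Lemma A_0 h : A 0 h = if Nat.eqb h 0 then 1 else 0.
Proof. unfold A; rewrite an_0; destruct (Nat.eqb h 0); reflexivity. Qed.
Lemma Mr_0 : Mr 0 = 1.
Proof. reflexivity. Qed.
Lemma A_supp n h : (n < h)%nat -> A n h = 0.
Proof. intros H; unfold A; rewrite an_supp; auto. Qed.
Lemma A_nonneg n h : 0 <= A n h.
Proof. apply pos_INR. Qed.

Fixpoint fR (n h : nat) : R :=
  match n with
  | O => if Nat.eqb h 1 then 1 else 0
  | S n' => match h with O => 0 | S h' => fR n' h' + fR n' (S (S h')) end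
  end.

Lemma fR_0 n : fR n 0 = 0.
Proof. destruct n; reflexivity. Qed.
Lemma fR_nonneg n h : 0 <= fR n h.
Proof.
  revert h; induction n; intros h; simpl.
  - destruct (Nat.eqb h 1); lra.
  - destruct h; [lra|]. pose proof (IHn h); pose proof (IHn (S (S h))); lra.
Qed.
Lemma fR_supp n h : (n + 2 <= h)%nat -> fR n h = 0.
Proof.
  revert h; induction n; intros h Hh; simpl.
  - destruct h as [|[|h]]; simpl; try lia; reflexivity.
  - destruct h; [lia|]. rewrite !IHn by lia. lra.
Qed.

Lemma window n h : sm (n + 2) (fun i => fR n (h + i)) <= sm (n + 2) (fR n).
Proof.
  assert (E : sm (n + 2 + h) (fR n) = sm (n + 2) (fR n)).
  { rewrite (Nat.add_comm (n + 2) h). apply sm_tail0. intros; apply fR_supp; lia. }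
  rewrite <- E, (sm_split h (n + 2) (fR n)).
  assert (0 <= sm h (fR n)) by (apply sm_nonneg; intros; apply fR_nonneg).
  rewrite (sm_ext _ (fun i => fR n (h + i)) (fun i => fR n (i + h))).
  2:{ intros; rewrite Nat.add_comm; reflexivity. }
  lra.
Qed.

Lemma Fsum n : sm (n + 2) (fR n) <= 2 ^ n.
Proof.
  induction n as [|n IH].
  - simpl. lra.
  - replace (S n + 2)%nat with (S (n + 2)) by lia.
    rewrite sm_shift, fR_0.
    rewrite (sm_ext _ (fun i => fR (S n) (S i)) (fun i => fR n i + fR n (S (S i)))) by (intros; reflexivity).
    rewrite sm_add.
    pose proof (window n 2) as W. simpl (2 + _)%nat in W.
    simpl. lra.
Qed.

Definition D r n h := sm (n + 2) (fun i => sig r i * fR n (h + i)).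
Definition E r n := sm (n + 2) (fun j => sig r (j + 3) * fR n j).

Lemma D_SS r n h : D r (S n) (S h) = D r n h + D r n (S (S h)).
Proof.
  unfold D. replace (S n + 2)%nat with (S (n + 2)) by lia.
  rewrite (sm_ext _ _ (fun i => sig r i * fR n (h + i) + sig r i * fR n (S (S h) + i)))
    by (intros; simpl; ring).
  rewrite sm_last0.
  2:{ rewrite !fR_supp by lia. ring. }
  apply sm_add.
Qed.

Lemma D_S0 r n : 0 < r -> r^3 + 2 * r^2 + r - 1 = 0 -> D r (S n) 0 = E r n - D r n 0.
Proof.
  intros H0 Hc. unfold D, E.
  replace (S n + 2)%nat with (S (S (S n))) by lia.
  replace (n + 2)%nat with (S (S n)) by lia.
  rewrite sm_shift. simpl (0 + 0)%nat. rewrite fR_0, Rmult_0_r, Rplus_0_l.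
  rewrite (sm_ext _ _ (fun i => sig r (S i) * fR n i + sig r (S i) * fR n (S (S i))))
    by (intros; simpl; ring).
  rewrite sm_add, <- sm_sub.
  rewrite (sm_ext _ (fun i => sig r (i + 3) * fR n i - sig r (0 + i) * fR n (0 + i))
     (fun j => sig r (S j) * fR n j + (if Nat.leb 2 j then sig r (j - 1) else 0) * fR n j)).
  2:{ intros j _. destruct j as [|j].
      - cbn [Nat.add]. rewrite !fR_0. ring.
      - simpl (0 + S j)%nat. pose proof (J1 r (S j) H0 Hc ltac:(lia)) as HJ.
        replace (S j + 1)%nat with (S (S j)) in HJ by lia.
        transitivity ((sig r (S j + 3) - sig r (S j)) * fR n (S j)); [ring|]. rewrite HJ. ring. }
  rewrite sm_add. f_equal.
  rewrite (sm_shift (S n) (fun j => (if Nat.leb 2 j then sig r (j - 1) else 0) * fR n j)).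
  rewrite (sm_shift n (fun i => (if Nat.leb 2 (S i) then sig r (S i - 1) else 0) * fR n (S i))).
  simpl (Nat.leb 2 0). simpl (Nat.leb 2 1).
  rewrite (sm_last0 (S n) (fun i => sig r (S i) * fR n (S (S i)))).
  2:{ rewrite fR_supp by lia. ring. }
  rewrite (sm_last0 n (fun i => sig r (S i) * fR n (S (S i)))).
  2:{ rewrite fR_supp by lia. ring. }
  rewrite (sm_ext n (fun i => (if Nat.leb 2 (S (S i)) then sig r (S (S i) - 1) else 0) * fR n (S (S i)))
    (fun i => sig r (S i) * fR n (S (S i)))).
  2:{ intros i _. simpl. replace (i - 0)%nat with i by lia. reflexivity. }
  ring.
Qed.

Lemma D_1 r n : D r n 1 = sm (n + 2) (fun j => sig r (j - 1) * fR n j).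
Proof.
  unfold D. replace (n + 2)%nat with (S (S n)) by lia.
  rewrite (sm_shift (S n) (fun j => sig r (j - 1) * fR n j)), fR_0, Rmult_0_r, Rplus_0_l.
  rewrite (sm_last0 (S n) (fun i => sig r i * fR n (1 + i))).
  2:{ rewrite fR_supp by lia. ring. }
  apply sm_ext. intros i _. simpl. replace (i - 0)%nat with i by lia. reflexivity.
Qed.

Lemma E_S r n : 0 < r -> r^3 + 2 * r^2 + r - 1 = 0 -> E r (S n) = 3 * E r n - 2 * D r n 0 - D r n 1.
Proof.
  intros H0 Hc. rewrite D_1. unfold D, E.
  replace (S n + 2)%nat with (S (S (S n))) by lia.
  replace (n + 2)%nat with (S (S n)) by lia.
  rewrite sm_shift, fR_0, Rmult_0_r, Rplus_0_l.
  rewrite (sm_ext _ _ (fun j => sig r (j + 4) * fR n j + sig r (j + 4) * fR n (S (S j)))).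
  2:{ intros j _. replace (S j + 3)%nat with (j + 4)%nat by lia. simpl. ring. }
  rewrite sm_add.
  rewrite (sm_last0 (S n) (fun j => sig r (j + 4) * fR n (S (S j)))).
  2:{ rewrite fR_supp by lia. ring. }
  rewrite (sm_last0 n (fun j => sig r (j + 4) * fR n (S (S j)))).
  2:{ rewrite fR_supp by lia. ring. }
  assert (Hs : sm n (fun j => sig r (j + 4) * fR n (S (S j))) =
          sm (S (S n)) (fun j => (if Nat.leb 2 j then sig r (j + 2) else 0) * fR n j)).
  { rewrite sm_shift, sm_shift. simpl (Nat.leb 2 0). simpl (Nat.leb 2 1).
    rewrite Rmult_0_l, Rmult_0_l, !Rplus_0_l. apply sm_ext. intros i _.
    simpl (Nat.leb 2 (S (S i))). replace (S (S i) + 2)%nat with (i + 4)%nat by lia. reflexivity. }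
  rewrite Hs, <- sm_add.
  rewrite <- (sm_scal _ 3), <- (sm_scal _ 2), <- sm_sub, <- sm_sub.
  apply sm_ext. intros j _. destruct j as [|j].
  - cbn [Nat.add]. rewrite !fR_0. ring.
  - pose proof (J2 r (S j) H0 Hc ltac:(lia)) as HJ.
    rewrite Nat.add_0_l.
    transitivity ((sig r (S j + 4) + (if Nat.leb 2 (S j) then sig r (S j + 2) else 0)) * fR n (S j)); [ring|].
    rewrite HJ. ring.
Qed.

Lemma main_rep r n : 0 < r -> r^3 + 2 * r^2 + r - 1 = 0 ->
  (forall h, A (S n) h - / r * A n h = D r n h) /\ Mr (S n) - / r * Mr n = E r n.
Proof.
  intros H0 Hc. induction n as [|n [IH1 IH2]].
  - split.
    + intros h. unfold D. simpl (0 + 2)%nat. cbn [sm].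
      rewrite sig0, sig1.
      destruct h as [|[|h]].
      * rewrite A_S0, Mr_0, !A_0. simpl. ring.
      * rewrite A_SS, !A_0. simpl. ring.
      * rewrite A_SS, !A_0. simpl. ring.
    + unfold E. simpl (0 + 2)%nat. cbn [sm]. rewrite Mr_S, Mr_0, !A_0.
      replace (1 + 3)%nat with 4%nat by reflexivity. rewrite sig4, sig1 by auto.
      simpl. ring.
  - split.
    + intros [|h].
      * rewrite A_S0, D_S0 by auto. rewrite <- IH2, <- (IH1 0%nat). rewrite (A_S0 n). ring.
      * rewrite A_SS, D_SS, <- IH1, <- IH1, (A_SS n h). ring.
    + rewrite (Mr_S (S n)), E_S by auto. rewrite <- IH2, <- (IH1 0%nat), <- (IH1 1%nat), (Mr_S n). ring.
Qed.

Lemma D_bound r n h : 0 < r -> r^3 + 2 * r^2 + r - 1 = 0 -> Rabs (D r n h) <= Bs r * 2 ^ n.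
Proof.
  intros H0 Hc. unfold D. eapply Rle_trans; [apply sm_abs|].
  eapply Rle_trans.
  - apply (sm_le _ _ (fun i => Bs r * fR n (h + i))). intros i _.
    rewrite Rabs_mult, (Rabs_right (fR n (h + i))) by (apply Rle_ge, fR_nonneg).
    apply Rmult_le_compat_r; [apply fR_nonneg| apply sig_bound; auto].
  - rewrite sm_scal. pose proof (window n h). pose proof (Fsum n).
    assert (0 <= Bs r) by (eapply Rle_trans; [apply Rabs_pos| apply (sig_bound r 0); auto]).
    apply Rmult_le_compat_l; lra.
Qed.

Lemma E_bound r n : 0 < r -> r^3 + 2 * r^2 + r - 1 = 0 -> Rabs (E r n) <= Bs r * 2 ^ n.
Proof.
  intros H0 Hc. unfold E. eapply Rle_trans; [apply sm_abs|].
  eapply Rle_trans.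
  - apply (sm_le _ _ (fun i => Bs r * fR n i)). intros i _.
    rewrite Rabs_mult, (Rabs_right (fR n i)) by (apply Rle_ge, fR_nonneg).
    apply Rmult_le_compat_r; [apply fR_nonneg| apply sig_bound; auto].
  - rewrite sm_scal. pose proof (Fsum n).
    assert (0 <= Bs r) by (eapply Rle_trans; [apply Rabs_pos| apply (sig_bound r 0); auto]).
    apply Rmult_le_compat_l; lra.
Qed.

Definition nbv (u : nat -> R) (h : nat) : R :=
  match h with O => 0 | S h' => u h' + u (S (S h')) end.

Lemma nb_lemma (w u : nat -> R) N :
  sm (S N) (fun h => w h * nbv u h) =
  sm N (fun j => u j * (w (S j) + if Nat.leb 2 j then w (j - 1)%nat else 0))
  + (if Nat.leb 2 N then w (N - 1)%nat * u N else 0) + (if Nat.leb 1 N then w N * u (S N) else 0).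
Proof.
  induction N as [|N IH].
  - simpl. ring.
  - change (sm (S (S N)) (fun h => w h * nbv u h)) with
      (sm (S N) (fun h => w h * nbv u h) + w (S N) * nbv u (S N)).
    rewrite IH. cbn [sm]. simpl (nbv u (S N)).
    destruct N as [|[|N]]; simpl; try ring.
Qed.

Lemma WS (w : nat -> R) n :
  sm (n + 2) (fun h => w h * A (S n) h) =
  w 0%nat * (Mr n - A n 0) + sm (n + 1) (fun j => A n j * (w (S j) + if Nat.leb 2 j then w (j - 1)%nat else 0)).
Proof.
  replace (n + 2)%nat with (S (n + 1)) by lia.
  rewrite sm_shift, A_S0.
  rewrite (sm_ext _ (fun i => w (S i) * A (S n) (S i)) (fun i => w (S i) * nbv (A n) (S i)))
    by (intros; simpl; rewrite A_SS; reflexivity).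
  pose proof (nb_lemma w (A n) (n + 1)) as NB. rewrite sm_shift in NB. simpl (nbv (A n) 0) in NB.
  rewrite Rmult_0_r, Rplus_0_l in NB. rewrite NB.
  rewrite (A_supp n (n + 1)) by lia. rewrite (A_supp n (S (n + 1))) by lia.
  destruct (Nat.leb 2 (n+1)); destruct (Nat.leb 1 (n+1)); ring.
Qed.

Lemma Msum n : sm (n + 1) (A n) = Mr n.
Proof.
  induction n as [|n IH].
  - simpl. rewrite A_0, Mr_0. simpl. ring.
  - replace (S n + 1)%nat with (n + 2)%nat by lia.
    rewrite (sm_ext _ (A (S n)) (fun h => 1 * A (S n) h)) by (intros; ring).
    rewrite WS, Mr_S.
    rewrite (sm_ext _ _ (fun j => A n j + (A n j - (if Nat.eqb j 0 then A n 0 else 0)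
                                            - (if Nat.eqb j 1 then A n 1 else 0)))).
    2:{ intros j _. destruct j as [|[|j]]; simpl; ring. }
    rewrite sm_add, !sm_sub, !sm_ind, IH.
    destruct n as [|n].
    + simpl. rewrite (A_0 1). simpl. ring.
    + rewrite (proj2 (Nat.ltb_lt 0 (S n + 1))) by lia.
      rewrite (proj2 (Nat.ltb_lt 1 (S n + 1))) by lia. ring.
Qed.

Definition t0 r := r + r ^ 2.
Definition cc r := r / (1 - 2 * r).
Definition ww r h := if Nat.eqb h 0 then 1 else cc r * (1 - t0 r ^ h).

Lemma consts r : 0 < r -> r^3 + 2 * r^2 + r - 1 = 0 ->
  2 * cc r + 1 = / r * cc r /\ / r * t0 r = t0 r ^ 2 + 1 /\ cc r * (1 - t0 r) = / r.
Proof.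
  intros H0 Hc. pose proof (r_bounds r H0 Hc). pose proof (inv_r r H0 Hc) as Iv.
  unfold cc, t0. split; [|split].
  - field. lra.
  - rewrite Iv. nra.
  - rewrite Iv. apply (Rmult_eq_reg_r (1 - 2 * r)); [|lra].
    unfold Rdiv. field_simplify; [|lra]. nra.
Qed.

Lemma ww_step r h : 0 < r -> r^3 + 2 * r^2 + r - 1 = 0 ->
  ww r (S h) + (if Nat.leb 2 h then ww r (h - 1)%nat else 0) + (if Nat.eqb h 0 then 0 else ww r 0%nat)
  = / r * ww r h.
Proof.
  intros H0 Hc. destruct (consts r H0 Hc) as [F1 [F2 F3]].
  assert (F4 : cc r * / r = 2 * cc r + 1) by (rewrite F1; ring).
  unfold ww. destruct h as [|[|h]]; simpl Nat.eqb; simpl Nat.leb.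
  - simpl. rewrite !Rmult_1_r, F3. ring.
  - simpl. rewrite !Rmult_1_r.
    replace (/ r * (cc r * (1 - t0 r))) with (cc r * / r - cc r * (/ r * t0 r)) by ring.
    rewrite F2, F4. ring.
  - replace (S (S h) - 1)%nat with (S h) by lia.
    replace (t0 r ^ S (S (S h))) with (t0 r ^ S h * t0 r ^ 2) by (simpl; ring).
    replace (t0 r ^ S (S h)) with (t0 r ^ S h * t0 r) by (simpl; ring).
    replace (/ r * (cc r * (1 - t0 r ^ S h * t0 r))) with
      (cc r * / r - cc r * t0 r ^ S h * (/ r * t0 r)) by ring.
    rewrite F2, F4. ring.
Qed.

Lemma Cons r n : 0 < r -> r^3 + 2 * r^2 + r - 1 = 0 ->
  sm (n + 1) (fun h => ww r h * A n h) = (/ r) ^ n.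
Proof.
  intros H0 Hc. induction n as [|n IH].
  - simpl. rewrite A_0. unfold ww. simpl. ring.
  - replace (S n + 1)%nat with (n + 2)%nat by lia.
    rewrite WS. rewrite <- Msum.
    assert (Hm : sm (n + 1) (A n) - A n 0 =
                 sm (n + 1) (fun j => A n j - (if Nat.eqb j 0 then A n 0 else 0))).
    { rewrite sm_sub, sm_ind. rewrite (proj2 (Nat.ltb_lt 0 (n + 1))) by lia. ring. }
    rewrite Hm. unfold ww at 1. simpl (Nat.eqb 0 0). rewrite Rmult_1_l, <- sm_add.
    rewrite (sm_ext _ _ (fun h => / r * (ww r h * A n h))).
    2:{ intros j _. rewrite <- Rmult_assoc, <- (ww_step r j H0 Hc).
        assert (Hw0 : ww r 0 = 1) by reflexivity. rewrite Hw0.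
        destruct j as [|j]; simpl Nat.eqb; cbv beta iota; ring. }
    rewrite sm_scal, IH. simpl. ring.
Qed.

Lemma zero_lemma q K z : 0 <= q < 1 -> (forall n, Rabs z <= K * q ^ n) -> z = 0.
Proof.
  intros Hq H. destruct (Req_dec z 0) as [|Hz]; auto. exfalso.
  assert (Hp : 0 < Rabs z) by (apply Rabs_pos_lt; auto).
  assert (HK : 0 < K). { specialize (H 0%nat). simpl in H. lra. }
  destruct (pow_lt_1_zero q ltac:(rewrite Rabs_right; lra) (Rabs z / K)) as [N HN].
  { apply Rdiv_lt_0_compat; lra. }
  specialize (HN N (Nat.le_refl N)). specialize (H N).
  rewrite Rabs_right in HN by (apply Rle_ge, pow_le; lra).
  assert (K * q ^ N < Rabs z).
  { apply (Rmult_lt_compat_l K) in HN; auto.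
    replace (K * (Rabs z / K)) with (Rabs z) in HN by (field; lra). lra. }
  lra.
Qed.

Lemma nq_bound q n : 0 <= q < 1 -> INR (S n) * q ^ n <= / (1 - q).
Proof.
  intros Hq.
  assert (H : forall n, INR (S n) * q ^ n <= sum_f_R0 (fun i => q ^ i) n).
  { induction n0 as [|n0 IH].
    - simpl. lra.
    - rewrite tech5. rewrite S_INR.
      assert (0 <= sum_f_R0 (fun i => q ^ i) n0).
      { apply cond_pos_sum. intros; apply pow_le; lra. }
      assert (q ^ S n0 = q * q ^ n0) by reflexivity.
      assert (0 <= q ^ n0) by (apply pow_le; lra).
      nra. }
  eapply Rle_trans; [apply H|]. rewrite tech3 by lra.
  unfold Rdiv. rewrite <- (Rmult_1_l (/ (1 - q))) at 2. apply Rmult_le_compat_r.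
  - apply Rlt_le, Rinv_0_lt_compat; lra.
  - assert (0 <= q ^ S n) by (apply pow_le; lra). lra.
Qed.

Lemma zero_lemma_n q K z : 0 <= q < 1 -> (forall n, Rabs z <= K * INR (S n) * q ^ n) -> z = 0.
Proof.
  intros Hq H. apply (zero_lemma q (2 * Rmax K 0 * / (1 - q))); auto.
  intros n. specialize (H (n + n)%nat).
  eapply Rle_trans; [apply H|].
  rewrite pow_add.
  assert (E : INR (S (n + n)) <= 2 * INR (S n)).
  { rewrite !S_INR, plus_INR. pose proof (pos_INR n). lra. }
  pose proof (nq_bound q n Hq).
  assert (0 <= q ^ n) by (apply pow_le; lra).
  assert (0 <= INR (S n)) by apply pos_INR.
  assert (K <= Rmax K 0) by apply Rmax_l. assert (0 <= Rmax K 0) by apply Rmax_r.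
  assert (0 <= INR (S (n + n))) by apply pos_INR.
  assert (K * INR (S (n + n)) * (q ^ n * q ^ n) <= Rmax K 0 * (2 * INR (S n)) * (q ^ n * q ^ n)).
  { assert (0 <= q ^ n * q ^ n) by nra. apply Rmult_le_compat_r; auto.
    apply Rle_trans with (Rmax K 0 * INR (S (n + n))). apply Rmult_le_compat_r; auto.
    apply Rmult_le_compat_l; auto. }
  assert (Rmax K 0 * (2 * INR (S n)) * (q ^ n * q ^ n) =
          2 * Rmax K 0 * (INR (S n) * q ^ n) * q ^ n) by ring.
  assert (2 * Rmax K 0 * (INR (S n) * q ^ n) * q ^ n <= 2 * Rmax K 0 * / (1 - q) * q ^ n).
  { apply Rmult_le_compat_r; auto. apply Rmult_le_compat_l; lra. }
  lra.
Qed.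

Lemma LIM (x : nat -> R) K q : 0 <= q < 1 -> (forall n, Rabs (x (S n) - x n) <= K * q ^ n) ->
  { L | forall n, Rabs (x n - L) <= K * q ^ n / (1 - q) }.
Proof.
  intros Hq H.
  assert (HK : 0 <= K). { specialize (H 0%nat). simpl in H. pose proof (Rabs_pos (x 1%nat - x 0%nat)). lra. }
  assert (T : forall n k, Rabs (x (k + n)%nat - x n) <= K * q ^ n * (1 - q ^ k) / (1 - q)).
  { intros n k. induction k as [|k IH].
    - simpl. replace (x n - x n) with 0 by ring. rewrite Rabs_R0.
      replace (K * q ^ n * (1 - 1) / (1 - q)) with 0 by (field; lra). lra.
    - replace (x (S k + n)%nat - x n) with ((x (S (k + n)) - x (k + n)%nat) + (x (k + n)%nat - x n)) by (simpl; ring).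
      eapply Rle_trans; [apply Rabs_triang|].
      specialize (H (k + n)%nat). rewrite pow_add in H.
      replace (K * q ^ n * (1 - q ^ S k) / (1 - q)) with
        (K * (q ^ k * q ^ n) + K * q ^ n * (1 - q ^ k) / (1 - q)) by (simpl; field; lra).
      lra. }
  assert (T2 : forall n m, (n <= m)%nat -> Rabs (x m - x n) <= K * q ^ n / (1 - q)).
  { intros n m Hnm. replace m with ((m - n) + n)%nat by lia.
    eapply Rle_trans; [apply T|].
    unfold Rdiv. apply Rmult_le_compat_r; [apply Rlt_le, Rinv_0_lt_compat; lra|].
    assert (0 <= q ^ (m - n)) by (apply pow_le; lra).
    assert (0 <= K * q ^ n) by (apply Rmult_le_pos; auto; apply pow_le; lra). nra. }
  assert (C : Cauchy_crit x).
  { intros eps Heps.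
    destruct (pow_lt_1_zero q ltac:(rewrite Rabs_right; lra) (eps * (1 - q) / (2 * (K + 1)))) as [N HN].
    { apply Rdiv_lt_0_compat; [apply Rmult_lt_0_compat|]; lra. }
    exists N. intros n m Hn Hm. unfold R_dist.
    specialize (HN N (Nat.le_refl N)). rewrite Rabs_right in HN by (apply Rle_ge, pow_le; lra).
    pose proof (T2 N n Hn). pose proof (T2 N m Hm).
    assert (K * q ^ N / (1 - q) < eps / 2).
    { apply (Rmult_lt_reg_r (1 - q)); [lra|].
      replace (K * q ^ N / (1 - q) * (1 - q)) with (K * q ^ N) by (field; lra).
      assert (K * q ^ N <= (K + 1) * q ^ N) by (assert (0 <= q ^ N) by (apply pow_le; lra); nra).
      assert ((K + 1) * q ^ N < (K + 1) * (eps * (1 - q) / (2 * (K + 1)))) by (apply Rmult_lt_compat_l; lra).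
      replace ((K + 1) * (eps * (1 - q) / (2 * (K + 1)))) with (eps / 2 * (1 - q)) in H3 by (field; lra).
      lra. }
    replace (x n - x m) with ((x n - x N) - (x m - x N)) by ring.
    eapply Rle_lt_trans; [apply Rabs_triang|]. rewrite Rabs_Ropp. lra. }
  destruct (R_complete x C) as [L HL]. exists L.
  intros n. destruct (Rle_or_lt (Rabs (x n - L)) (K * q ^ n / (1 - q))) as [|Hlt]; auto.
  exfalso.
  destruct (HL (Rabs (x n - L) - K * q ^ n / (1 - q)) ltac:(lra)) as [N HN].
  specialize (HN (N + n)%nat ltac:(lia)). unfold R_dist in HN.
  pose proof (T2 n (N + n)%nat ltac:(lia)).
  pose proof (Rabs_triang (x n - x (N + n)%nat) (x (N + n)%nat - L)).
  replace ((x n - x (N + n)%nat) + (x (N + n)%nat - L)) with (x n - L) in H1 by ring.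
  assert (Rabs (x n - x (N + n)%nat) = Rabs (x (N + n)%nat - x n)) by apply Rabs_minus_sym.
  lra.
Qed.

Lemma step_gen r (X : nat -> R) (Dv : nat -> R) n : 0 < r -> r^3 + 2 * r^2 + r - 1 = 0 ->
  X (S n) - / r * X n = Dv n -> Rabs (Dv n) <= Bs r * 2 ^ n ->
  Rabs (X (S n) * r ^ S n - X n * r ^ n) <= (Bs r * r) * (2 * r) ^ n.
Proof.
  intros H0 Hc E B.
  replace (X (S n) * r ^ S n - X n * r ^ n) with (r ^ S n * (X (S n) - / r * X n))
    by (simpl; field; lra).
  rewrite E, Rabs_mult, Rabs_right by (apply Rle_ge, pow_le; lra).
  replace ((Bs r * r) * (2 * r) ^ n) with (r ^ S n * (Bs r * 2 ^ n)) by (simpl; rewrite Rpow_mult_distr; ring).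
  apply Rmult_le_compat_l; auto. apply pow_le; lra.
Qed.

Lemma limits r : 0 < r -> r^3 + 2 * r^2 + r - 1 = 0 ->
  { f : nat -> R & { M : R |
    (forall h n, Rabs (A n h * r ^ n - f h) <= (Bs r * r) * (2 * r) ^ n / (1 - 2 * r)) /\
    (forall n, Rabs (Mr n * r ^ n - M) <= (Bs r * r) * (2 * r) ^ n / (1 - 2 * r)) } }.
Proof.
  intros H0 Hc. pose proof (r_bounds r H0 Hc) as Rb.
  assert (Hq : 0 <= 2 * r < 1) by lra.
  exists (fun h => proj1_sig (LIM (fun n => A n h * r ^ n) (Bs r * r) (2 * r) Hq
     (fun n => step_gen r (fun k => A k h) (fun k => D r k h) n H0 Hc
        (proj1 (main_rep r n H0 Hc) h) (D_bound r n h H0 Hc)))).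
  exists (proj1_sig (LIM (fun n => Mr n * r ^ n) (Bs r * r) (2 * r) Hq
     (fun n => step_gen r Mr (E r) n H0 Hc
        (proj2 (main_rep r n H0 Hc)) (E_bound r n H0 Hc)))).
  split.
  - intros h n. match goal with |- context [proj1_sig ?s] => destruct s as [L HL] end. apply HL.
  - intros n. match goal with |- context [proj1_sig ?s] => destruct s as [L HL] end. apply HL.
Qed.

Lemma pow_le1 x n : 0 <= x <= 1 -> x ^ n <= 1.
Proof. intros H; induction n; simpl; [lra|]. pose proof (pow_le x n). nra. Qed.

Lemma pow_mono x y n : 0 <= x <= y -> x ^ n <= y ^ n.
Proof. intros H; apply pow_incr; auto. Qed.

Lemma tri3 a b c : Rabs (a + b + c) <= Rabs a + Rabs b + Rabs c.
Proof.
  eapply Rle_trans; [apply Rabs_triang|]. pose proof (Rabs_triang a b). lra.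
Qed.

Lemma f_struct r (f : nat -> R) (M Kc : R) : 0 < r -> r^3 + 2 * r^2 + r - 1 = 0 -> 0 <= Kc ->
  (forall h n, Rabs (A n h * r ^ n - f h) <= Kc * (2 * r) ^ n) ->
  (forall n, Rabs (Mr n * r ^ n - M) <= Kc * (2 * r) ^ n) ->
  (forall h, f h = t0 r ^ h * f 0%nat) /\ M = (/ r + 1) * f 0%nat.
Proof.
  intros H0 Hc HK Hf HM. pose proof (r_bounds r H0 Hc) as Rb.
  assert (Hq : 0 <= 2 * r < 1) by lra.
  assert (Hq1 : forall n, (2 * r) ^ S n <= (2 * r) ^ n).
  { intros n. simpl. pose proof (pow_le (2 * r) n). nra. }
  assert (R1 : forall h, f (S h) = r * (f h + f (S (S h)))).
  { intros h. apply Rminus_diag_uniq.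
    apply (zero_lemma (2 * r) (3 * Kc)); auto. intros n.
    assert (Ex : A (S n) (S h) * r ^ S n = r * (A n h * r ^ n + A n (S (S h)) * r ^ n))
      by (rewrite A_SS; simpl; ring).
    pose proof (Hf (S h) (S n)) as B1. pose proof (Hf h n) as B2. pose proof (Hf (S (S h)) n) as B3.
    pose proof (Hq1 n).
    replace (f (S h) - r * (f h + f (S (S h)))) with
      (- (A (S n) (S h) * r ^ S n - f (S h)) + r * (A n h * r ^ n - f h) + r * (A n (S (S h)) * r ^ n - f (S (S h))))
      by (rewrite Ex; ring).
    eapply Rle_trans; [apply tri3|]. rewrite Rabs_Ropp.
    rewrite !Rabs_mult, !(Rabs_right r) by lra.
    assert (0 <= Kc * (2 * r) ^ n) by (apply Rmult_le_pos; auto; apply pow_le; lra).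
    assert (Kc * (2 * r) ^ S n <= Kc * (2 * r) ^ n) by (apply Rmult_le_compat_l; auto).
    nra. }
  assert (RM : f 0%nat = r * (M - f 0%nat)).
  { apply Rminus_diag_uniq.
    apply (zero_lemma (2 * r) (3 * Kc)); auto. intros n.
    assert (Ex : A (S n) 0 * r ^ S n = r * (Mr n * r ^ n - A n 0 * r ^ n))
      by (rewrite A_S0; simpl; ring).
    pose proof (Hf 0%nat (S n)) as B1. pose proof (Hf 0%nat n) as B2. pose proof (HM n) as B3.
    pose proof (Hq1 n).
    replace (f 0%nat - r * (M - f 0%nat)) with
      (- (A (S n) 0 * r ^ S n - f 0%nat) + r * (Mr n * r ^ n - M) - r * (A n 0 * r ^ n - f 0%nat))
      by (rewrite Ex; ring).
    unfold Rminus at 1. eapply Rle_trans; [apply tri3|]. rewrite !Rabs_Ropp.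
    rewrite !Rabs_mult, !(Rabs_right r) by lra.
    assert (0 <= Kc * (2 * r) ^ n) by (apply Rmult_le_pos; auto; apply pow_le; lra).
    assert (Kc * (2 * r) ^ S n <= Kc * (2 * r) ^ n) by (apply Rmult_le_compat_l; auto).
    nra. }
  assert (Dec : forall h, Rabs (f (S h)) <= Kc * (2 * r) ^ h).
  { intros h. pose proof (Hf (S h) h) as B. rewrite A_supp in B by lia.
    rewrite Rmult_0_l, Rminus_0_l, Rabs_Ropp in B. auto. }
  set (t := t0 r).
  assert (Ht : t * (1 + r) = 1) by (unfold t, t0; nra).
  assert (Ht2 : / r - t = 1 + r) by (unfold t, t0; rewrite inv_r by auto; ring).
  assert (Htp : 0 < t < 1) by (unfold t, t0; nra).
  set (Z := fun h => f (S h) - t * f h).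
  assert (ZS : forall h, t * Z (S h) = Z h).
  { intros h. unfold Z.
    assert (F : f (S (S h)) = / r * f (S h) - f h).
    { rewrite (R1 h). field. lra. }
    rewrite F.
    replace (t * (/ r * f (S h) - f h - t * f (S h))) with (t * (/ r - t) * f (S h) - t * f h) by ring.
    rewrite Ht2, Ht. ring. }
  assert (Z0 : forall h, Z 0%nat = t ^ h * Z h).
  { induction h as [|h IH]. simpl; ring. rewrite IH, <- (ZS h). simpl. ring. }
  assert (Z00 : Z 0%nat = 0).
  { apply (zero_lemma (2 * r) (2 * Kc)); auto. intros n.
    rewrite (Z0 (S n)). unfold Z. rewrite Rabs_mult.
    rewrite (Rabs_right (t ^ S n)) by (apply Rle_ge, pow_le; lra).
    assert (Hle : t ^ S n <= 1) by (apply pow_le1; lra).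
    assert (0 <= t ^ S n) by (apply pow_le; lra).
    assert (Rabs (f (S (S n)) - t * f (S n)) <= 2 * Kc * (2 * r) ^ n).
    { eapply Rle_trans; [apply Rabs_triang|]. rewrite Rabs_Ropp, Rabs_mult, (Rabs_right t) by lra.
      pose proof (Dec (S n)). pose proof (Dec n). pose proof (Hq1 n).
      assert (Kc * (2 * r) ^ S n <= Kc * (2 * r) ^ n) by (apply Rmult_le_compat_l; auto).
      assert (0 <= Rabs (f (S n))) by apply Rabs_pos. nra. }
    assert (0 <= Rabs (f (S (S n)) - t * f (S n))) by apply Rabs_pos. nra. }
  assert (Zall : forall h, Z h = 0).
  { induction h as [|h IH]; auto. pose proof (ZS h). rewrite IH in H.
    apply Rmult_integral in H. destruct H; auto. lra. }
  split.
  - induction h as [|h IH]. simpl; ring.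
    pose proof (Zall h). unfold Z in H. simpl. rewrite Rmult_assoc, <- IH. lra.
  - assert (r * M = (1 + r) * f 0%nat) by lra.
    apply (Rmult_eq_reg_l r); [|lra]. rewrite H. field. lra.
Qed.

Definition Lp r := (12 - 17 * r - 4 * r ^ 2) / 31.
Definition Winf r := 1 + cc r * t0 r / (1 - t0 r) - cc r * t0 r ^ 2 / (1 - t0 r ^ 2).

Lemma Lp_Winf r : 0 < r -> r^3 + 2 * r^2 + r - 1 = 0 -> Lp r * Winf r = 1.
Proof.
  intros H0 Hc. pose proof (r_bounds r H0 Hc).
  assert (d1 : 1 - 2 * r <> 0) by lra.
  assert (d2 : 1 - t0 r <> 0) by (unfold t0; nra).
  assert (d3 : 1 - t0 r ^ 2 <> 0) by (unfold t0; nra).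
  set (N := (1 - 2 * r) * (1 - t0 r) * (1 - t0 r ^ 2) + r * t0 r * (1 - t0 r ^ 2)
            - r * t0 r ^ 2 * (1 - t0 r)).
  assert (E1 : Winf r = N / ((1 - 2 * r) * (1 - t0 r) * (1 - t0 r ^ 2))).
  { unfold Winf, N, cc. field. auto. }
  assert (E2 : Lp r * N - (1 - 2 * r) * (1 - t0 r) * (1 - t0 r ^ 2) =
     (r ^ 3 + 2 * r ^ 2 + r - 1) *
     ((19 - 21 * r - 42 * r ^ 2 - 3 * r ^ 3 + 47 * r ^ 4 + 38 * r ^ 5 + 8 * r ^ 6) / 31)).
  { unfold Lp, N, t0. field. }
  rewrite Hc, Rmult_0_l in E2. rewrite E1. unfold Rdiv. rewrite <- Rmult_assoc.
  replace (Lp r * N) with ((1 - 2 * r) * (1 - t0 r) * (1 - t0 r ^ 2)) by lra.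
  apply Rinv_r. repeat apply Rmult_integral_contrapositive_currified; auto.
Qed.

Lemma scale r (L Kc : R) : 0 < r -> r^3 + 2 * r^2 + r - 1 = 0 -> 0 <= Kc ->
  (forall h n, Rabs (A n h * r ^ n - t0 r ^ h * L) <= Kc * (2 * r) ^ n) ->
  L = Lp r.
Proof.
  intros H0 Hc HK Hf. pose proof (r_bounds r H0 Hc) as Rb.
  assert (Hq : 0 <= 2 * r < 1) by lra.
  set (t := t0 r) in *.
  assert (Htp : 0 < t < 1) by (unfold t, t0; nra).
  assert (Htq : t <= 2 * r) by (unfold t, t0; nra).
  assert (Hcc : 0 < cc r) by (unfold cc; apply Rdiv_lt_0_compat; lra).
  assert (Wb : forall h, 0 <= ww r h <= 1 + cc r).
  { intros [|h]; unfold ww; simpl Nat.eqb. lra.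
    change (t0 r) with t.
    assert (0 <= t ^ S h <= 1) by (split; [apply pow_le| apply pow_le1]; lra).
    split; nra. }
  assert (Ha : forall n, Rabs (1 - L * sm (n + 1) (fun h => ww r h * t ^ h)) <=
                         INR (n + 1) * ((1 + cc r) * (Kc * (2 * r) ^ n))).
  { intros n.
    assert (C1 : sm (n + 1) (fun h => ww r h * (A n h * r ^ n)) = 1).
    { rewrite (sm_ext _ _ (fun h => r ^ n * (ww r h * A n h))) by (intros; ring).
      rewrite sm_scal, Cons by auto. rewrite <- Rpow_mult_distr, Rinv_r by lra. apply pow1. }
    replace (1 - L * sm (n + 1) (fun h => ww r h * t ^ h)) with
      (sm (n + 1) (fun h => ww r h * (A n h * r ^ n) - L * (ww r h * t ^ h)))
      by (rewrite sm_sub, sm_scal, C1; reflexivity).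
    apply sm_bound. intros h _.
    replace (ww r h * (A n h * r ^ n) - L * (ww r h * t ^ h)) with
      (ww r h * (A n h * r ^ n - t ^ h * L)) by ring.
    rewrite Rabs_mult, (Rabs_right (ww r h)) by (apply Rle_ge, Wb).
    apply Rmult_le_compat; [apply (proj1 (Wb h))|apply Rabs_pos|apply (proj2 (Wb h))|apply Hf]. }
  assert (Hb : forall n, Rabs (sm (n + 1) (fun h => ww r h * t ^ h) - Winf r) <=
      (cc r * t / (1 - t) + cc r * t ^ 2 / (1 - t ^ 2)) * (2 * r) ^ n).
  { intros n. rewrite Nat.add_1_r, sm_shift.
    rewrite (sm_ext _ _ (fun i => (cc r * t) * t ^ i - (cc r * t ^ 2) * (t ^ 2) ^ i)).
    2:{ intros i _. unfold ww. simpl Nat.eqb. change (t0 r) with t.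
        replace ((t ^ 2) ^ i) with (t ^ i * t ^ i) by (rewrite <- Rpow_mult_distr; f_equal; ring).
        simpl. ring. }
    rewrite sm_sub, !sm_scal, !sm_geom by nra.
    unfold ww; simpl Nat.eqb. unfold Winf. change (t0 r) with t.
    replace (1 * t ^ 0 + (cc r * t * ((1 - t ^ n) / (1 - t)) - cc r * t ^ 2 * ((1 - (t ^ 2) ^ n) / (1 - t ^ 2)))
             - (1 + cc r * t / (1 - t) - cc r * t ^ 2 / (1 - t ^ 2)))
      with (- (cc r * t / (1 - t)) * t ^ n + (cc r * t ^ 2 / (1 - t ^ 2)) * (t ^ 2) ^ n)
      by (simpl; field; split; nra).
    eapply Rle_trans; [apply Rabs_triang|]. rewrite Rabs_mult, Rabs_mult, Rabs_Ropp.
    assert (0 < cc r * t / (1 - t)) by (apply Rdiv_lt_0_compat; nra).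
    assert (Ht2 : 0 < t ^ 2 < 1) by (simpl; nra).
    assert (0 < cc r * t ^ 2 / (1 - t ^ 2)) by (apply Rdiv_lt_0_compat; [apply Rmult_lt_0_compat|]; lra).
    rewrite (Rabs_right (cc r * t / (1 - t))), (Rabs_right (cc r * t ^ 2 / (1 - t ^ 2))) by lra.
    rewrite (Rabs_right (t ^ n)), (Rabs_right ((t ^ 2) ^ n)) by (apply Rle_ge, pow_le; nra).
    assert (t ^ n <= (2 * r) ^ n) by (apply pow_mono; lra).
    assert ((t ^ 2) ^ n <= (2 * r) ^ n) by (apply pow_mono; nra).
    nra. }
  assert (Hd : 1 - L * Winf r = 0).
  { apply (zero_lemma_n (2 * r) ((1 + cc r) * Kc + Rabs L * (cc r * t / (1 - t) + cc r * t ^ 2 / (1 - t ^ 2)))); auto.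
    intros n. specialize (Ha n). specialize (Hb n).
    set (Wn := sm (n + 1) (fun h => ww r h * t ^ h)) in *.
    replace (1 - L * Winf r) with ((1 - L * Wn) + L * (Wn - Winf r)) by ring.
    eapply Rle_trans; [apply Rabs_triang|]. rewrite Rabs_mult.
    assert (0 <= (2 * r) ^ n) by (apply pow_le; lra).
    assert (1 <= INR (S n)) by (rewrite S_INR; pose proof (pos_INR n); lra).
    replace (INR (n + 1)) with (INR (S n)) in Ha by (f_equal; lia).
    assert (0 <= cc r * t / (1 - t) + cc r * t ^ 2 / (1 - t ^ 2)).
    { assert (0 < cc r * t / (1 - t)) by (apply Rdiv_lt_0_compat; nra).
      assert (Ht2 : 0 < t ^ 2 < 1) by (simpl; nra).
      assert (0 < cc r * t ^ 2 / (1 - t ^ 2)) by (apply Rdiv_lt_0_compat; [apply Rmult_lt_0_compat|]; lra). lra. }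
    assert (Rabs L * Rabs (Wn - Winf r) <= Rabs L * ((cc r * t / (1 - t) + cc r * t ^ 2 / (1 - t ^ 2)) * (2 * r) ^ n))
      by (apply Rmult_le_compat_l; auto; apply Rabs_pos).
    pose proof (Rabs_pos L).
    assert (0 <= Rabs L * (cc r * t / (1 - t) + cc r * t ^ 2 / (1 - t ^ 2)) * (2 * r) ^ n) by
      (apply Rmult_le_pos; auto; apply Rmult_le_pos; auto).
    assert (0 <= (1 + cc r) * Kc * (2 * r) ^ n) by (apply Rmult_le_pos; auto; apply Rmult_le_pos; lra).
    nra. }
  pose proof (Lp_Winf r H0 Hc).
  assert (Winf r <> 0) by (intro Hz; rewrite Hz in H; lra).
  apply (Rmult_eq_reg_r (Winf r)); auto. lra.
Qed.

Lemma fin X C Kc q r n : 0 < r -> 0 <= Kc -> 0 <= q < 1 -> 0 < C -> (1 <= n)%nat ->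
  Rabs (X * r ^ n - C) <= Kc * q ^ n ->
  Rabs (X - C * (/ r) ^ n) <= Kc / ((1 - q) * C) / INR n * (C * (/ r) ^ n).
Proof.
  intros H0 HK Hq HC Hn H.
  assert (Hmu : 0 < (/ r) ^ n) by (apply pow_lt, Rinv_0_lt_compat; auto).
  assert (Hrr : (/ r) ^ n * r ^ n = 1) by (rewrite <- Rpow_mult_distr, Rinv_l by lra; apply pow1).
  replace (X - C * (/ r) ^ n) with ((/ r) ^ n * (X * r ^ n - C))
    by (transitivity (X * ((/ r) ^ n * r ^ n) - C * (/ r) ^ n); [ring| rewrite Hrr; ring]).
  rewrite Rabs_mult, (Rabs_right ((/ r) ^ n)) by lra.
  assert (HnR : 0 < INR n) by (apply lt_0_INR; lia).
  pose proof (nq_bound q n Hq) as NQ. rewrite S_INR in NQ.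
  assert (0 <= q ^ n) by (apply pow_le; lra).
  assert (INR n * q ^ n <= / (1 - q)) by nra.
  replace (Kc / ((1 - q) * C) / INR n * (C * (/ r) ^ n)) with
    ((/ r) ^ n * (Kc * (/ (1 - q)) / INR n)) by (field; repeat split; lra).
  apply Rmult_le_compat_l; [lra|].
  eapply Rle_trans; [apply H|].
  apply (Rmult_le_reg_r (INR n)); auto.
  replace (Kc * / (1 - q) / INR n * INR n) with (Kc * / (1 - q)) by (field; lra).
  replace (Kc * q ^ n * INR n) with (Kc * (INR n * q ^ n)) by ring.
  apply Rmult_le_compat_l; auto.
Qed.

Lemma U1 x y : 0 < x -> 31 * x ^ 3 - 62 * x ^ 2 + 35 * x - 3 = 0 ->
  31 * y ^ 3 - 62 * y ^ 2 + 35 * y - 3 = 0 -> 0.1 < y < 0.11 -> x = y.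
Proof.
  intros Hx Ex Ey Hy.
  assert (F : (x - y) * (31 * (x ^ 2 + x * y + y ^ 2) - 62 * (x + y) + 35) = 0).
  { replace ((x - y) * (31 * (x ^ 2 + x * y + y ^ 2) - 62 * (x + y) + 35)) with
      ((31 * x ^ 3 - 62 * x ^ 2 + 35 * x - 3) - (31 * y ^ 3 - 62 * y ^ 2 + 35 * y - 3)) by ring.
    rewrite Ex, Ey; ring. }
  apply Rmult_integral in F. destruct F as [F|F]; [lra|].
  exfalso. assert (P : 0 < 2883 * y ^ 2 - 3844 * y + 496) by nra.
  assert (Q : 124 * (31 * (x ^ 2 + x * y + y ^ 2) - 62 * (x + y) + 35) =
              (62 * x + 31 * y - 62) ^ 2 + (2883 * y ^ 2 - 3844 * y + 496)) by ring.
  rewrite F in Q. pose proof (pow2_ge_0 (62 * x + 31 * y - 62)). lra.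
Qed.

Lemma U2 x y : 31 * x ^ 3 - 31 * x ^ 2 + 16 * x - 3 = 0 ->
  31 * y ^ 3 - 31 * y ^ 2 + 16 * y - 3 = 0 -> x = y.
Proof.
  intros Ex Ey.
  assert (F : (x - y) * (31 * (x ^ 2 + x * y + y ^ 2) - 31 * (x + y) + 16) = 0).
  { replace ((x - y) * (31 * (x ^ 2 + x * y + y ^ 2) - 31 * (x + y) + 16)) with
      ((31 * x ^ 3 - 31 * x ^ 2 + 16 * x - 3) - (31 * y ^ 3 - 31 * y ^ 2 + 16 * y - 3)) by ring.
    rewrite Ex, Ey; ring. }
  apply Rmult_integral in F. destruct F as [F|F]; [lra|].
  exfalso.
  assert (Q : 12 * (31 * (x ^ 2 + x * y + y ^ 2) - 31 * (x + y) + 16) =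
     372 * (x + y / 2 - 1 / 2) ^ 2 + 279 * (y - 1 / 3) ^ 2 + 68) by (field).
  rewrite F in Q. pose proof (pow2_ge_0 (x + y / 2 - 1 / 2)). pose proof (pow2_ge_0 (y - 1/3)). lra.
Qed.

Lemma Lp_cubic r : r^3 + 2 * r^2 + r - 1 = 0 ->
  31 * Lp r ^ 3 - 62 * Lp r ^ 2 + 35 * Lp r - 3 = 0.
Proof.
  intros Hc.
  replace (31 * Lp r ^ 3 - 62 * Lp r ^ 2 + 35 * Lp r - 3) with
    ((r^3 + 2 * r^2 + r - 1) * ((-2937 - 2444 * r - 688 * r ^ 2 - 64 * r ^ 3) / 961))
    by (unfold Lp; field).
  rewrite Hc; ring.
Qed.

Lemma Mp_cubic r : r^3 + 2 * r^2 + r - 1 = 0 ->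
  let m := ((1 + r) ^ 2 + 1) * Lp r in 31 * m ^ 3 - 31 * m ^ 2 + 16 * m - 3 = 0.
Proof.
  intros Hc m. unfold m.
  replace (31 * (((1 + r) ^ 2 + 1) * Lp r) ^ 3 - 31 * (((1 + r) ^ 2 + 1) * Lp r) ^ 2
           + 16 * (((1 + r) ^ 2 + 1) * Lp r) - 3) with
    ((r^3 + 2 * r^2 + r - 1) * ((-4989 + 2371 * r + 10373 * r ^ 2 + 4926 * r ^ 3 - 17413 * r ^ 4
       - 27468 * r ^ 5 - 19633 * r ^ 6 - 6732 * r ^ 7 - 1072 * r ^ 8 - 64 * r ^ 9) / 961))
    by (unfold Lp; field).
  rewrite Hc; ring.
Qed.

Theorem corollary4p7 (rho0 Ce Cm : R) :
  0 < rho0 -> rho0 ^ 3 + 2 * rho0 ^ 2 + rho0 - 1 = 0 ->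
  0 < Ce -> 31 * Ce ^ 3 - 62 * Ce ^ 2 + 35 * Ce - 3 = 0 ->
  0 < Cm -> 31 * Cm ^ 3 - 31 * Cm ^ 2 + 16 * Cm - 3 = 0 ->
  (exists M : R, exists N : nat, forall n : nat, (N <= n)%nat ->
     Rabs (INR (excursion_count n) - Ce * (/ rho0) ^ n)
       <= M / INR n * (Ce * (/ rho0) ^ n)) /\
  (exists M : R, exists N : nat, forall n : nat, (N <= n)%nat ->
     Rabs (INR (meander_count n) - Cm * (/ rho0) ^ n)
       <= M / INR n * (Cm * (/ rho0) ^ n)).
Proof.
  intros H0 Hc HCe ECe HCm ECm.
  set (r := rho0) in *.
  pose proof (r_bounds r H0 Hc) as Rb.
  assert (Hq : 0 <= 2 * r < 1) by lra.
  destruct (limits r H0 Hc) as [f [M [Hf HM]]].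
  set (Kc := Bs r * r / (1 - 2 * r)).
  assert (HBs : 0 <= Bs r) by (eapply Rle_trans; [apply Rabs_pos| apply (sig_bound r 0); auto]).
  assert (HK : 0 <= Kc) by (unfold Kc; apply Rmult_le_pos; [apply Rmult_le_pos; lra|apply Rlt_le, Rinv_0_lt_compat; lra]).
  assert (Hf' : forall h n, Rabs (A n h * r ^ n - f h) <= Kc * (2 * r) ^ n).
  { intros h n. eapply Rle_trans; [apply Hf|]. unfold Kc. right. field. lra. }
  assert (HM' : forall n, Rabs (Mr n * r ^ n - M) <= Kc * (2 * r) ^ n).
  { intros n. eapply Rle_trans; [apply HM|]. unfold Kc. right. field. lra. }
  destruct (f_struct r f M Kc H0 Hc HK Hf' HM') as [Fh FM].
  assert (HL : f 0%nat = Lp r).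
  { apply (scale r (f 0%nat) Kc H0 Hc HK). intros h n. rewrite <- Fh. apply Hf'. }
  assert (Lb : 0.1 < Lp r < 0.11) by (unfold Lp; nra).
  assert (ECe' : Ce = f 0%nat) by (rewrite HL; apply U1; auto; apply Lp_cubic; auto).
  assert (ECm' : Cm = M).
  { rewrite FM, HL, inv_r by auto. apply U2; auto. apply Mp_cubic; auto. }
  split.
  - exists (Kc / ((1 - 2 * r) * Ce)), 1%nat. intros n Hn.
    rewrite exc_an. fold (A n 0). apply fin; auto. rewrite ECe'. apply Hf'.
  - exists (Kc / ((1 - 2 * r) * Cm)), 1%nat. intros n Hn.
    rewrite mea_mn. fold (Mr n). apply fin; auto. rewrite ECm'. apply HM'.
Qed.
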